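(* For any $\alpha,\beta\in\mathbb N$, $n\in\mathbb Z$ and $\epsilon\in\{0,1\}$: $M_{\alpha,n}M_{\beta,n+\epsilon}=\mathfrak q^{\min(\alpha,\beta)\epsilon}M_{\beta,n+\epsilon}M_{\alpha,n}$ in $U^>_q(L\mathfrak{sl}_2)$.
   Context: Let $q$ be a formal variable and $\mathfrak q=q^2$. $U^>_q(L\mathfrak{sl}_2)$ is the $\mathbb C(q)$-algebra generated by $e_r$ ($r\in\mathbb Z$) subject to $(z-q^2w)e(z)e(w)=(q^2z-w)e(w)e(z)$, $e(z)=\sum_re_rz^{-r}$. Set $M_{0,n}=1$, $M_{1,n}=e_{-n}$ and, for $k\ge1$, $M_{k,n}=\frac{(-1)^{k(k-1)/2}}{(1-\mathfrak q)^{k-1}}Y_k$ where $Y_1=M_{1,n-k+1}$, $Y_j=[Y_{j-1},M_{1,n-k+2j-1}]_{\mathfrak q^j}$ ($2\le j\le k$), $[x,y]_c=xy-c\,yx$. *)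

(* Defs.v *)
From HB Require Import structures.
From mathcomp Require Import all_boot all_order all_algebra.
From mathcomp Require Import complex.
From mathcomp Require Import reals.
Set Implicit Arguments. Unset Strict Implicit. Unset Printing Implicit Defensive.
Import Order.TTheory GRing.Theory Num.Theory.
Local Open Scope ring_scope.

Definition Cq (R : realType) : fieldType := {fraction {poly R[i]}}.

Definition qv (R : realType) : Cq R := tofrac ('X : {poly R[i]}).

Definition qq (R : realType) : Cq R := qv R ^+ 2.

(* The series relation (z - q^2 w) e(z) e(w) = (q^2 z - w) e(w) e(z),
   with e(z) = \sum_r e_r z^{-r}, is equivalent (coefficient of
   z^{-a} w^{-b}) to
     e_{a+1} e_b - q^2 e_a e_{b+1} = q^2 e_b e_{a+1} - e_{b+1} e_a
   for all a, b in Z. *)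
Definition sl2_rel (R : realType) (A : algType (Cq R)) (e : int -> A) : Prop :=
  forall a b : int,
    e (a + 1) * e b - qq R *: (e a * e (b + 1))
    = qq R *: (e b * e (a + 1)) - e (b + 1) * e a.

Definition qcomm (R : realType) (A : algType (Cq R)) (c : Cq R) (x y : A) : A :=
  x * y - c *: (y * x).

(* Y_j for given k, n:  Y_1 = e_{-(n-k+1)},
   Y_j = [Y_{j-1}, M_{1, n-k+2j-1}]_{qq^j},  M_{1,m} = e_{-m}. *)
Fixpoint Yseq (R : realType) (A : algType (Cq R)) (e : int -> A)
  (k : nat) (n : int) (j : nat) : A :=
  match j with
  | 0 => 0 (* unused *)
  | 1 => e (- (n - k%:Z + 1))
  | j'.+1 => qcomm (qq R ^+ j'.+1) (Yseq e k n j')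
                   (e (- (n - k%:Z + 2 * (j'.+1)%:Z - 1)))
  end.

Definition Mkn (R : realType) (A : algType (Cq R)) (e : int -> A)
  (k : nat) (n : int) : A :=
  if k is 0 then 1
  else ((-1) ^+ (k * (k - 1) %/ 2) / (1 - qq R) ^+ (k - 1)) *: Yseq e k n k.

(* Main.v *)
Require Import Defs.
From HB Require Import structures.
From mathcomp Require Import all_boot all_order all_algebra.
From mathcomp Require Import complex reals ring zify.
Import Order.TTheory GRing.Theory Num.Theory.
Local Open Scope ring_scope.
Set Implicit Arguments. Unset Strict Implicit. Unset Printing Implicit Defensive.

Definition gsk (F : fieldType) (A : algType F) (t : F) (x y : A) (z : int) :=
  x * y = t ^ z *: (y * x).
Definition gq (F : fieldType) (A : algType F) (c : F) (x y : A) : A := x * y - c *: (y * x).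

Lemma RLg (F : fieldType) (A : algType F) (t : F) (a g y X : A) (K : nat) (r : int) :
  t != 0 ->
  gsk t a y (r + 1) -> y * g - t *: (g * y) = - X -> gsk t a X (K%:Z + r + 1) ->
  gsk t (gq (t ^+ K) a g) y r.
Proof.
rewrite /gsk /gq => tn0 h1 h2 h3.
have ya : y * a = t ^ (- (r + 1)) *: (a * y).
  by rewrite h1 scalerA -invr_expz mulVf ?scale1r // expfz_neq0.
have yg : y * g = t *: (g * y) - X.
  by move/eqP: h2; rewrite subr_eq => /eqP ->; rewrite addrC.
rewrite mulrBl -scalerAl -[g * a * y]mulrA h1 -scalerAr scalerA mulrA.
rewrite mulrBr -scalerAr scalerBr scalerA [y * (g * a)]mulrA [y * (a * g)]mulrA ya -scalerAl -[a * y * g]mulrA !yg.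
rewrite mulrBl mulrBr -scalerAl -scalerAr h3 !scalerBr !scalerA.
have e1 : t ^ r * t ^ (- (r + 1)) * t = 1.
  by rewrite -expfzDr // -[X in _ * X]expr1z -expfzDr // -(expr0z t); congr (_ ^ _); ring.
have e2 : t ^ r * t ^ (- (r + 1)) * t ^ (K%:Z + r + 1) = t ^ r * t ^+ K.
  by rewrite -!expfzDr // exprnP -expfzDr //; congr (_ ^ _); ring.
have e3 : t ^ r * t ^+ K * t = t ^+ K * t ^ (r + 1).
  by rewrite exprnP -!expfzDr // -[X in _ * X]expr1z -expfzDr //; congr (_ ^ _); ring.
by rewrite e1 e2 e3 scale1r mulrA opprB addrA subrK.
Qed.

Lemma LLg (F : fieldType) (A : algType F) (t : F) (h B y X : A) (K : nat) (r : int) :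
  t != 0 ->
  gsk t B y (r - 1) -> h * y - t *: (y * h) = - X -> gsk t B X (r - 1 - K%:Z) ->
  gsk t (gq (t ^+ K) h B) y r.
Proof.
rewrite /gsk /gq => tn0 h1 h2 h3.
have hy : h * y = t *: (y * h) - X.
  by move/eqP: h2; rewrite subr_eq => /eqP ->; rewrite addrC.
rewrite mulrBl -scalerAl -[h * B * y]mulrA -[B * h * y]mulrA h1 hy.
rewrite -scalerAr mulrA hy mulrBr -scalerAr h3 mulrBl -scalerAl.
rewrite [B * (y * h)]mulrA h1 -scalerAl mulrBr -scalerAr.
rewrite !scalerBr !scalerA !mulrA.
have e1 : t ^ (r - 1) * t = t ^ r.
  by rewrite -[X in _ * X]expr1z -expfzDr // subrK.
have e2 : t ^+ K * t * t ^ (r - 1) = t ^ r * t ^+ K.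
  by rewrite exprnP -[X in _ * X * _]expr1z -!expfzDr //; congr (_ ^ _); ring.
have e3 : t ^+ K * t ^ (r - 1 - K%:Z) = t ^ (r - 1).
  by rewrite exprnP -!expfzDr //; congr (_ ^ _); ring.
by rewrite e1 e2 e3 opprB addrA subrK.
Qed.

Lemma gskM (F : fieldType) (A : algType F) (t : F) (x y1 y2 : A) (z1 z2 : int) :
  t != 0 -> gsk t x y1 z1 -> gsk t x y2 z2 -> gsk t x (y1 * y2) (z1 + z2).
Proof.
rewrite /gsk => tn0 h1 h2.
by rewrite mulrA h1 -scalerAl -[y1 * x * y2]mulrA h2 -scalerAr mulrA scalerA expfzDr.
Qed.

Lemma gskZ (F : fieldType) (A : algType F) (t : F) (x y : A) (a : F) (z : int) :
  gsk t x y z -> gsk t x (a *: y) z.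
Proof. by rewrite /gsk => h; rewrite -scalerAr h -scalerAl !scalerA mulrC. Qed.

Lemma gskB (F : fieldType) (A : algType F) (t : F) (x y1 y2 : A) (z : int) :
  gsk t x y1 z -> gsk t x y2 z -> gsk t x (y1 - y2) z.
Proof. by rewrite /gsk => h1 h2; rewrite mulrBr mulrBl h1 h2 scalerBr. Qed.

Lemma gsk0 (F : fieldType) (A : algType F) (t : F) (x : A) (z : int) : gsk t x 0 z.
Proof. by rewrite /gsk mulr0 mul0r scaler0. Qed.

Lemma gskQ (F : fieldType) (A : algType F) (t : F) (x y1 y2 : A) (a : F) (z1 z2 : int) :
  t != 0 -> gsk t x y1 z1 -> gsk t x y2 z2 -> gsk t x (gq a y1 y2) (z1 + z2).
Proof.
move=> tn0 h1 h2; rewrite /gq; apply: gskB; first exact: gskM.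
by apply: gskZ; rewrite addrC; apply: gskM.
Qed.

Lemma gskE (F : fieldType) (A : algType F) (t : F) (x y : A) (z1 z2 : int) :
  z1 = z2 -> gsk t x y z1 -> gsk t x y z2.
Proof. by move=> ->. Qed.

Lemma gskV (F : fieldType) (A : algType F) (t : F) (x y : A) (z : int) :
  t != 0 -> gsk t x y z -> gsk t y x (- z).
Proof.
rewrite /gsk => tn0 ->; rewrite scalerA -invr_expz mulVf ?scale1r //.
by rewrite expfz_neq0.
Qed.

Lemma zJ (V : zmodType) (P Q x1 x2 y1 y2 : V) :
  x1 - x2 = y1 - y2 -> P - x1 - (y2 - Q) = P - y1 - (x2 - Q).
Proof.
move=> h; have -> : x1 = y1 - y2 + x2 by rewrite -h subrK.
rewrite !opprD !opprK !addrA.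
by rewrite [P - y1 + y2 - x2 - y2]addrAC addrK.
Qed.

Lemma Jg (F : fieldType) (A : algType F) (a b : F) (h B g : A) :
  B * (a *: (h * g) - b *: (g * h)) = (a *: (h * g) - b *: (g * h)) * B ->
  gq b (gq a h B) g = gq b h (gq a B g).
Proof.
rewrite /gq => hB.
rewrite !mulrBl !mulrBr -!scalerAl -!scalerAr !scalerBr !scalerA in hB *.
rewrite !mulrA in hB *.
exact: zJ.
Qed.

Fixpoint Wg (F : fieldType) (A : algType F) (t : F) (f : int -> A) (j : nat) (c : int) : A :=
  match j with
  | 0 => 0
  | j'.+1 => if j' is 0 then f c
             else gq (t ^+ j) (Wg t f j' (c - 1)) (f (c + j'%:Z))
  end.

Definition grel (F : fieldType) (A : algType F) (t : F) (f : int -> A) :=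
  forall c d : int, f c * f d - t *: (f d * f c)
    = - (f (d - 1) * f (c + 1) - t *: (f (c + 1) * f (d - 1))).

Lemma Wg1 (F : fieldType) (A : algType F) (t : F) (f : int -> A) c : Wg t f 1 c = f c.
Proof. by []. Qed.

Lemma WgS (F : fieldType) (A : algType F) (t : F) (f : int -> A) j c :
  Wg t f j.+2 c = gq (t ^+ j.+2) (Wg t f j.+1 (c - 1)) (f (c + j.+1%:Z)).
Proof. by []. Qed.

Lemma mainS (F : fieldType) (A : algType F) (t : F) (f : int -> A) :
  t != 0 -> grel t f -> (forall c, gsk t (f c) (f (c + 1)) 1) ->
  forall k, (forall c m, c - k.+1%:Z <= m <= c + k.+1%:Z ->
               gsk t (Wg t f k.+1 c) (f m) (m - c)) /\
            (forall c, Wg t f k.+2 c = gq (t ^+ k.+2) (f (c - k.+1%:Z)) (Wg t f k.+1 (c + 1))).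
Proof.
move=> tn0 hr ha; elim=> [|k [IS IL]].
  split.
    move=> c m /andP [h1 h2]; rewrite Wg1.
    have : (m = c - 1) \/ (m = c) \/ (m = c + 1) by lia.
    case=> [->|[->|->]].
    - apply: (gskE (z1 := - 1)); first by ring.
      by apply: gskV => //; have := ha (c - 1); rewrite subrK.
    - by rewrite /gsk subrr expr0z scale1r.
    - by apply: (gskE (z1 := 1)); [ring | exact: ha].
  by move=> c; rewrite WgS.
have IS2 : forall c m, c - k.+2%:Z <= m <= c + k.+2%:Z ->
    gsk t (Wg t f k.+2 c) (f m) (m - c).
  move=> c m /andP [h1 h2].
  have [hm|hm] : m <= c + k%:Z \/ c + k.+1%:Z <= m by lia.
  - rewrite WgS.
    pose X := f (c + k%:Z) * f (m + 1) - t *: (f (m + 1) * f (c + k%:Z)).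
    apply: (RLg (X := X)) => //.
    + apply: (gskE (z1 := m - (c - 1))); first by ring.
      apply: IS; lia.
    + have := hr m (c + k.+1%:Z).
      by rewrite (_ : c + k.+1%:Z - 1 = c + k%:Z); last by lia.
    + have [em|hm'] : m = c + k%:Z \/ m <= c + k%:Z - 1 by lia.
        have -> : X = 0.
          apply/eqP; rewrite /X em subr_eq0; apply/eqP.
          by have := ha (c + k%:Z); rewrite /gsk expr1z.
        exact: gsk0.
      apply: (gskE (z1 := (c + k%:Z - (c - 1)) + (m + 1 - (c - 1)))); first by lia.
      by apply: gskQ => //; apply: IS; lia.
  - rewrite IL.
    pose X := f (m - 1) * f (c - k.+1%:Z + 1) - t *: (f (c - k.+1%:Z + 1) * f (m - 1)).
    apply: (LLg (X := X)) => //.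
    + apply: (gskE (z1 := m - (c + 1))); first by ring.
      apply: IS; lia.
    + apply: (gskE (z1 := (m - 1 - (c + 1)) + (c - k.+1%:Z + 1 - (c + 1)))); first by lia.
      by apply: gskQ => //; apply: IS; lia.
split => // c.
rewrite [Wg _ _ k.+3 _]WgS (IL (c - 1)) [Wg _ _ k.+2 (c + 1)]WgS.
rewrite (_ : c - 1 - k.+1%:Z = c - k.+2%:Z); last by lia.
rewrite (_ : c - 1 + 1 = c); last by ring.
rewrite (_ : c + 1 - 1 = c); last by ring.
rewrite (_ : c + 1 + k.+1%:Z = c + k.+2%:Z); last by lia.
apply: Jg.
set h := f (c - k.+2%:Z); set g := f (c + k.+2%:Z).
have hZ : t ^+ k.+2 *: (h * g) - t ^+ k.+3 *: (g * h)
    = (- t ^+ k.+2) *: (f (c + k.+1%:Z) * f (c - k.+1%:Z)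
                        - t *: (f (c - k.+1%:Z) * f (c + k.+1%:Z))).
  rewrite [t ^+ k.+3]exprSr -scalerA -scalerBr /h /g (hr (c - k.+2%:Z) (c + k.+2%:Z)) scaleNr scalerN.
  rewrite (_ : c + k.+2%:Z - 1 = c + k.+1%:Z); last by lia.
  by rewrite (_ : c - k.+2%:Z + 1 = c - k.+1%:Z); last by lia.
rewrite hZ.
have : gsk t (Wg t f k.+1 c) (- t ^+ k.+2 *: (f (c + k.+1%:Z) * f (c - k.+1%:Z)
                        - t *: (f (c - k.+1%:Z) * f (c + k.+1%:Z)))) 0.
  apply: gskZ; apply: (gskE (z1 := (c + k.+1%:Z - c) + (c - k.+1%:Z - c))); first by lia.
  by apply: gskQ => //; apply: IS; lia.
by rewrite /gsk expr0z scale1r.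
Qed.

Lemma Gg (F : fieldType) (A : algType F) (t : F) (f : int -> A) (x : A) (d lo hi : int) :
  t != 0 -> (forall m, lo <= m <= hi -> gsk t x (f m) (m - d)) ->
  forall (j : nat) c, lo <= c - j%:Z -> c + j%:Z <= hi ->
    gsk t x (Wg t f j.+1 c) (j.+1%:Z * (c - d)).
Proof.
move=> tn0 H; elim=> [|j IH] c h1 h2.
  rewrite Wg1; apply: (gskE (z1 := c - d)); first by rewrite mul1r.
  by apply: H; lia.
rewrite WgS; apply: (gskE (z1 := j.+1%:Z * (c - 1 - d) + (c + j.+1%:Z - d))).
  by rewrite [j.+2%:Z]intS [j.+1%:Z]intS; ring.
by apply: gskQ => //; [apply: IH; lia | apply: H; lia].
Qed.

Lemma YW (R : realType) (A : algType (Cq R)) (e : int -> A) (k : nat) (n : int) (j : nat) :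
  Yseq e k n j.+1 = Wg (qq R) (fun m => e (- m)) j.+1 (n - k%:Z + j.+1%:Z).
Proof.
elim: j => [|j IH]; first by [].
have -> : Yseq e k n j.+2 = qcomm (qq R ^+ j.+2) (Yseq e k n j.+1)
    (e (- (n - k%:Z + 2 * j.+2%:Z - 1))) by [].
rewrite IH WgS /qcomm /gq.
rewrite (_ : n - k%:Z + j.+2%:Z - 1 = n - k%:Z + j.+1%:Z); last by lia.
by rewrite (_ : n - k%:Z + 2 * j.+2%:Z - 1 = n - k%:Z + j.+2%:Z + j.+1%:Z); last by lia.
Qed.

Lemma qq_neq0 (R : realType) : qq R != 0.
Proof. by rewrite /qq expf_neq0 // /qv tofrac_eq0 polyX_eq0. Qed.

Lemma two_neq0 (R : realType) : (2 : Cq R) != 0.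
Proof.
by rewrite -(rmorph_nat (@tofrac _)) tofrac_eq0 -polyC_natr polyC_eq0 pnatr_eq0.
Qed.

Lemma zarr (V : zmodType) (P Q S T : V) : P - Q = S - T -> P - S = - (T - Q).
Proof.
move=> h; rewrite opprB -[P](subrK Q) h addrAC [S - T]addrC addrK addrC //.
Qed.

Lemma rel (R : realType) (A : algType (Cq R)) (e : int -> A) (c d : int) :
  sl2_rel e ->
  e (- c) * e (- d) - qq R *: (e (- d) * e (- c))
  = - (e (- (d - 1)) * e (- (c + 1)) - qq R *: (e (- (c + 1)) * e (- (d - 1)))).
Proof.
move=> /(_ (- c - 1) (- d)).
have -> : - c - 1 + 1 = - c by ring.
have -> : - (d - 1) = - d + 1 by ring.
have -> : - (c + 1) = - c - 1 by ring.
by move=> h; apply: zarr.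
Qed.

Lemma adj (R : realType) (A : algType (Cq R)) (e : int -> A) (c : int) :
  sl2_rel e -> gsk (qq R) (e (- c)) (e (- (c + 1))) 1.
Proof.
move=> /(rel c (c + 1)); have -> : c + 1 - 1 = c by ring.
set x := (X in X = - _) => h.
have : (2 : Cq R) *: x == 0 by rewrite scaler_nat mulr2n {2}h subrr.
rewrite scaler_eq0 (negPf (two_neq0 R)) /= subr_eq0 => /eqP.
by rewrite /gsk expr1z.
Qed.

Lemma scl (F : fieldType) (A : algType F) (sa sb c : F) (X Y : A) :
  X * Y = c *: (Y * X) -> (sa *: X) * (sb *: Y) = c *: ((sb *: Y) * (sa *: X)).
Proof.
move=> h; rewrite -!scalerAl -!scalerAr h !scalerA; congr (_ *: _); ring.
Qed.

Theorem proposition6p5 (R : realType) (A : algType (Cq R)) (e : int -> A) :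
  sl2_rel e ->
  forall (alpha beta : nat) (n : int) (eps : nat), (eps <= 1)%N ->
    Mkn e alpha n * Mkn e beta (n + eps%:Z)
    = (qq R ^+ (minn alpha beta * eps)) *: (Mkn e beta (n + eps%:Z) * Mkn e alpha n).
Proof.
move=> hrel alpha beta n eps heps.
pose f := fun m : int => e (- m).
have tn0 := qq_neq0 R.
have gr : grel (qq R) f by move=> c d; exact: rel.
have ga : forall c, gsk (qq R) (f c) (f (c + 1)) 1 by move=> c; exact: adj.
have MS := mainS tn0 gr ga.
case: alpha => [|a].
  by rewrite /Mkn /= min0n mul0n expr0 scale1r mul1r mulr1.
case: beta => [|b].
  by rewrite /Mkn /= minn0 mul0n expr0 scale1r mul1r mulr1.
have Mk : forall k m, Mkn e k.+1 m = ((-1) ^+ (k.+1 * (k.+1 - 1) %/ 2) / (1 - qq R) ^+ (k.+1 - 1)) *: Wg (qq R) f k.+1 m.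
  by move=> k m; rewrite /Mkn YW subrK.
rewrite !Mk; apply: scl; rewrite exprnP.
have [ab|ba] := leqP a b.
  have H := Gg (x := Wg (qq R) f b.+1 (n + eps%:Z)) (d := n + eps%:Z)
    (lo := n + eps%:Z - b.+1%:Z) (hi := n + eps%:Z + b.+1%:Z) tn0
    (fun m hm => (MS b).1 _ _ hm) (j := a) (c := n).
  have {}H := H ltac:(lia) ltac:(lia).
  apply: (gskE (z1 := - (a.+1%:Z * (n - (n + eps%:Z))))); last exact: gskV.
  rewrite (minn_idPl _); last by [].
  by rewrite PoszM; ring.
have H := Gg (x := Wg (qq R) f a.+1 n) (d := n)
  (lo := n - a.+1%:Z) (hi := n + a.+1%:Z) tn0
  (fun m hm => (MS a).1 _ _ hm) (j := b) (c := n + eps%:Z).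
have {}H := H ltac:(lia) ltac:(lia).
apply: (gskE (z1 := b.+1%:Z * (n + eps%:Z - n))); last exact: H.
rewrite (minn_idPr _); last by apply: ltnW.
by rewrite PoszM; ring.
Qed.
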